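(* Let $G$ be a prime $\{P_5,\overline{P_5}\}$-free graph and $v\in V(G)$. (1) If $v$ is antisimplicial and $u$ is a vertex non-adjacent to $v$ chosen so that $|N(u)\cap N(v)|$ is minimum among all vertices non-adjacent to $v$, then $u$ is simplicial. (2) If $v$ is simplicial and $u$ is a vertex adjacent to $v$ chosen so that $|N(u)\cup N(v)|$ is maximum among all neighbors of $v$, then $u$ is antisimplicial.
   Context: All graphs are finite and simple. $N(x)$ is the set of neighbors of $x$. $P_5$ is the path on five vertices and $\overline{P_5}$ its complement; $G$ is $H$-free if it has no induced subgraph isomorphic to $H$. A vertex $b\notin X$ is mixed on $X$ if it has both a neighbor and a non-neighbor in $X$. A homogeneous set is a set $X\subseteq V(G)$ with $1<|X|<|V(G)|$ such that no vertex outside $X$ is mixed on $X$. $G$ is prime if $|V(G)|\ge4$ and has no homogeneous set. A vertex $v$ is simplicial if $N(v)$ is a clique, antisimplicial if $V(G)\setminus N(v)$ is a stable set. *)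

(* Defs.v *)
From mathcomp Require Import all_boot.
Set Implicit Arguments. Unset Strict Implicit. Unset Printing Implicit Defensive.

Definition simple_graph (T : finType) (e : rel T) : Prop :=
  symmetric e /\ irreflexive e.

Definition nbhd (T : finType) (e : rel T) (x : T) : {set T} := [set y | e x y].

Definition has_induced (S T : finType) (h : rel S) (e : rel T) : Prop :=
  exists f : S -> T, injective f /\ forall a b, h a b = e (f a) (f b).

Definition H_free (S T : finType) (h : rel S) (e : rel T) : Prop :=
  ~ has_induced h e.

Definition P5 : rel 'I_5 := fun i j => (i.+1 == j :> nat) || (j.+1 == i :> nat).
Definition coP5 : rel 'I_5 := fun i j => (i != j) && ~~ P5 i j.

Definition mixed (T : finType) (e : rel T) (b : T) (X : {set T}) : bool :=
  (b \notin X) && [exists x in X, e b x] && [exists x in X, ~~ e b x].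

Definition homogeneous (T : finType) (e : rel T) (X : {set T}) : bool :=
  (1 < #|X| < #|T|) && [forall b, ~~ mixed e b X].

Definition prime_graph (T : finType) (e : rel T) : Prop :=
  4 <= #|T| /\ forall X : {set T}, ~~ homogeneous e X.

Definition is_clique (T : finType) (e : rel T) (X : {set T}) : bool :=
  [forall x in X, forall y in X, (x != y) ==> e x y].
Definition is_stable (T : finType) (e : rel T) (X : {set T}) : bool :=
  [forall x in X, forall y in X, ~~ e x y].

Definition simplicial (T : finType) (e : rel T) (v : T) : bool :=
  is_clique e (nbhd e v).
Definition antisimplicial (T : finType) (e : rel T) (v : T) : bool :=
  is_stable e (~: nbhd e v).

(* Main.v *)
Require Import Defs.
From mathcomp Require Import all_boot.
Set Implicit Arguments. Unset Strict Implicit. Unset Printing Implicit Defensive.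

Lemma P5_sep : [forall i : 'I_5, forall j : 'I_5, (i == j) || P5 i j || [exists k, P5 i k != P5 j k]].
Proof.
apply/forallP => i; apply/forallP => j; case: eqP => /= [//|nij];
  case hij: (P5 i j) => //=;
  apply/existsP; move: i j nij hij => [[|[|[|[|[|i]]]]] Hi] [[|[|[|[|[|j]]]]] Hj] //= nij hij;
  try (by exfalso; apply: nij; apply: val_inj);
  first [ by exists ord0 | by exists (@Ordinal 5 1 isT) | by exists (@Ordinal 5 2 isT) | by exists (@Ordinal 5 3 isT) | by exists (@Ordinal 5 4 isT)].
Qed.
Lemma coP5_sep : [forall i : 'I_5, forall j : 'I_5, (i == j) || coP5 i j || [exists k, coP5 i k != coP5 j k]].
Proof.
apply/forallP => i; apply/forallP => j; case: eqP => /= [//|nij];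
  case hij: (coP5 i j) => //=;
  apply/existsP; move: i j nij hij => [[|[|[|[|[|i]]]]] Hi] [[|[|[|[|[|j]]]]] Hj] //= nij hij;
  try (by exfalso; apply: nij; apply: val_inj);
  first [ by exists ord0 | by exists (@Ordinal 5 1 isT) | by exists (@Ordinal 5 2 isT) | by exists (@Ordinal 5 3 isT) | by exists (@Ordinal 5 4 isT)].
Qed.

Lemma induced_of (S T : finType) (h : rel S) (e : rel T) (f : S -> T) :
  irreflexive e ->
  [forall i, forall j, (i == j) || h i j || [exists k, h i k != h j k]] ->
  (forall a b, h a b = e (f a) (f b)) -> has_induced h e.
Proof.
move=> irr sep hf; exists f; split => // i j fij.
move/forallP: sep => /(_ i) /forallP /(_ j).
case: eqP => // _ /=; rewrite hf fij irr /= => /existsP [k].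
by rewrite !hf fij eqxx.
Qed.

Section G.
Variables (T : finType) (e : rel T).
Hypotheses (sym : symmetric e) (irr : irreflexive e).

Lemma p5_lem a0 a1 a2 a3 a4 :
  e a0 a1 -> e a1 a2 -> e a2 a3 -> e a3 a4 ->
  ~~ e a0 a2 -> ~~ e a0 a3 -> ~~ e a0 a4 -> ~~ e a1 a3 -> ~~ e a1 a4 -> ~~ e a2 a4 ->
  has_induced P5 e.
Proof.
move=> h01 h12 h23 h34 /negbTE n02 /negbTE n03 /negbTE n04 /negbTE n13 /negbTE n14 /negbTE n24.
apply: (@induced_of _ _ _ _ (fun i : 'I_5 => nth a0 [:: a0; a1; a2; a3; a4] i)) => //.
exact: P5_sep.
move=> [[|[|[|[|[|i]]]]] Hi] [[|[|[|[|[|j]]]]] Hj] //=;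
  rewrite ?irr // ?h01 ?h12 ?h23 ?h34 ?n02 ?n03 ?n04 ?n13 ?n14 ?n24 //;
  rewrite sym ?h01 ?h12 ?h23 ?h34 ?n02 ?n03 ?n04 ?n13 ?n14 ?n24 //.
Qed.

Lemma house_lem a b w u x :
  e a w -> e a u -> e a x -> e b u -> e b x -> e w x ->
  ~~ e a b -> ~~ e b w -> ~~ e w u -> ~~ e u x -> has_induced coP5 e.
Proof.
move=> h02 h03 h04 h13 h14 h24 /negbTE n01 /negbTE n12 /negbTE n23 /negbTE n34.
apply: (@induced_of _ _ _ _ (fun i : 'I_5 => nth a [:: a; b; w; u; x] i)) => //.
exact: coP5_sep.
move=> [[|[|[|[|[|i]]]]] Hi] [[|[|[|[|[|j]]]]] Hj] //=;
  rewrite ?irr // ?h02 ?h03 ?h04 ?h13 ?h14 ?h24 ?n01 ?n12 ?n23 ?n34 //;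
  rewrite sym ?h02 ?h03 ?h04 ?h13 ?h14 ?h24 ?n01 ?n12 ?n23 ?n34 //.
Qed.
End G.

Lemma stableP (T : finType) (e : rel T) X x y :
  is_stable e X -> x \in X -> y \in X -> ~~ e x y.
Proof. by move=> /forallP/(_ x)/implyP H xX yX; move/(_ xX)/forallP/(_ y)/implyP: H; apply. Qed.

Lemma cliqueP (T : finType) (e : rel T) X x y :
  is_clique e X -> x \in X -> y \in X -> x != y -> e x y.
Proof. by move=> /forallP/(_ x)/implyP H xX yX; move/(_ xX)/forallP/(_ y)/implyP: H => H /(implyP (H yX)). Qed.

Lemma part1 (T : finType) (e : rel T) :
  simple_graph e -> prime_graph e -> H_free P5 e -> H_free coP5 e ->
  forall v : T,
    antisimplicial e v ->
     forall u : T, u != v -> ~~ e u v ->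
     (forall w : T, w != v -> ~~ e w v ->
        #|nbhd e u :&: nbhd e v| <= #|nbhd e w :&: nbhd e v|) ->
     simplicial e u.
Proof.
move=> [sym irr] [T4 prim] hP5 hco v antis u uv nuv minm.
have nvu : ~~ e v u by rewrite sym.
have inS : forall w y, ~~ e v w -> e w y -> e v y.
  move=> w y nvw ewy; apply/negPn/negP => nvy.
  have := stableP antis (x := w) (y := y); rewrite !inE nvw nvy ewy => /(_ isT isT).
  done.
set A := nbhd e v; set B := nbhd e u.
have BA : forall y, y \in B -> y \in A by move=> y; rewrite !inE; apply: inS.
have c1 : forall z a b, ~~ e u z -> e v z -> a \in B -> b \in B -> ~~ e a b ->
    e z a -> ~~ e z b -> False.
  move=> z a b nuz evz aB bB nab eza nzb.
  have aA := BA _ aB; have bA := BA _ bB.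
  move: aB bB aA bA; rewrite !inE => eua eub eva evb.
  apply: hco; apply: (house_lem sym irr (a:=a) (b:=b) (w:=z) (u:=u) (x:=v));
    first [done | by rewrite sym].
have claim : forall z a b, z \notin B -> z != u -> a \in B -> b \in B -> ~~ e a b ->
    e z a -> e z b.
  move=> z a b zB zu aB bB nab eza; apply/negPn/negP => nzb.
  have nuz : ~~ e u z by rewrite inE in zB.
  case evz: (e v z); first exact: (c1 z a b).
  have zv : z != v by apply/eqP => ezv; move: nzb; rewrite ezv; move: (BA _ bB); rewrite inE => ->.
  have := minm z zv; rewrite sym evz => /(_ isT) hle.
  have [t] : exists2 t, t \in nbhd e z :&: A & t \notin B :&: A.
    apply/subsetPn/negP => sub.
    have : (nbhd e z :&: A) \proper (B :&: A).
      apply/properP; split => //; exists b; first by rewrite inE bB BA.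
      by rewrite !inE negb_and nzb.
    by move/proper_card; rewrite ltnNge hle.
  rewrite !inE => /andP [ezt evt] /nandP [] ntB; last by rewrite evt in ntB.
  have nvz : ~~ e v z by rewrite evz.
  move: aB bB (BA _ aB) (BA _ bB); rewrite !inE => eua eub eva evb.
  case eta: (e t a); case etb: (e t b).
  - apply: hco; apply: (house_lem sym irr (a:=a) (b:=b) (w:=z) (u:=u) (x:=t));
      first [done | by rewrite sym | by rewrite ?eta ?etb | by rewrite sym ?eta ?etb].
  - by apply: (c1 t a b) => //; rewrite ?inE // etb.
  - apply: (c1 t b a) => //; rewrite ?inE // ?eta //. by rewrite sym.
  - apply: hP5; apply: (p5_lem sym irr (a0:=t) (a1:=z) (a2:=a) (a3:=u) (a4:=b));
      first [done | by rewrite sym | by rewrite ?eta ?etb | by rewrite sym ?eta ?etb].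
apply/idPn => nsimp.
move/forall_inPn: nsimp => [x xB /forall_inPn [y yB]].
rewrite negb_imply => /andP [xy nxy].
set r := [rel p q | [&& p \in B, q \in B & ~~ e p q]].
have rsym : connect_sym r.
  apply: sym_connect_sym => p q; rewrite /r /= sym; do 2 case: (_ \in B) => //.
set K := [set k | connect r x k].
have KB : forall k, k \in K -> k \in B.
  have clB : closed r (mem B).
    by move=> p q; rewrite /r /= => /and3P [-> -> _].
  by move=> k; rewrite inE => /(closed_connect clB) <-.
apply: (negP (prim K)); rewrite /homogeneous; apply/andP; split.
  apply/andP; split.
    apply/card_gt1P; exists x, y; rewrite !inE connect0 xy; split => //.
    by apply: connect1; rewrite /r /= xB yB.
  have : K \subset [set~ u].
    apply/subsetP => k /KB; rewrite !inE; apply: contraTneq => ->; by rewrite irr.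
  move/subset_leq_card; rewrite cardsC1 => h; apply: (leq_ltn_trans h).
  by rewrite prednK // (ltn_trans _ T4).
apply/forallP => z; rewrite /mixed; apply/negP => /andP [/andP [zK /exists_inP [k1 k1K ez1]] /exists_inP [k2 k2K nez2]].
case zB: (z \in B).
  move: zK; rewrite inE => /negP; apply.
  apply: (connect_trans (y := k2)); first by rewrite inE in k2K.
  by apply: connect1; rewrite /r /= KB // zB /= sym.
case: (z =P u) => [zu | zu].
  by move: nez2; rewrite zu; move: (KB _ k2K); rewrite inE => ->.
have cl : closed r (mem [pred k | e z k]).
  move=> p q; rewrite /r /= => /and3P [pB qB npq].
  apply/idP/idP => h.
    by apply: (claim z p q) => //; rewrite ?zB //; apply/eqP.
  by apply: (claim z q p) => //; rewrite ?zB ?(sym q) //; apply/eqP.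
move: (closed_connect cl) => C.
move: k1K k2K; rewrite !inE => /C h1 /C h2.
by move: h1 h2 ez1 nez2; rewrite !inE /= => <- <- ->.
Qed.

Section Comp.
Variables (T : finType) (e : rel T).
Hypotheses (sym : symmetric e) (irr : irreflexive e).
Definition ce : rel T := fun x y => (x != y) && ~~ e x y.

Lemma ce_simple : simple_graph ce.
Proof. split; first by move=> x y; rewrite /ce eq_sym sym. by move=> x; rewrite /ce eqxx. Qed.

Lemma P5_irr (i : 'I_5) : P5 i i = false.
Proof. by rewrite /P5 (gtn_eqF (ltnSn _)). Qed.

Lemma ce_mixed b X : mixed ce b X = mixed e b X.
Proof.
rewrite /mixed; case bX: (b \in X) => //=.
have E : forall x, x \in X -> ce b x = ~~ e b x.
  by move=> x xX; rewrite /ce; case: eqP => // bx; rewrite bx xX in bX.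
rewrite andbC; congr (_ && _); apply/exists_inP/exists_inP => [] [x xX h]; exists x => //.
all: by move: h; rewrite !E // ?negbK.
Qed.

Lemma ce_prime : prime_graph e -> prime_graph ce.
Proof.
move=> [h4 hp]; split => // X.
suff -> : homogeneous ce X = homogeneous e X by [].
by rewrite /homogeneous; congr (_ && _); apply: eq_forallb => b; rewrite ce_mixed.
Qed.

Lemma ce_free1 : H_free coP5 e -> H_free P5 ce.
Proof.
move=> hf [f [inj hf']]; apply: hf; exists f; split => // a b.
move: (hf' a b); rewrite /coP5 /ce (inj_eq inj).
case: (a =P b) => [->|/eqP ab] /=; first by rewrite irr.
by move=> ->; rewrite negbK.
Qed.

Lemma ce_free2 : H_free P5 e -> H_free coP5 ce.
Proof.
move=> hf [f [inj hf']]; apply: hf; exists f; split => // a b.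
move: (hf' a b); rewrite /coP5 /ce (inj_eq inj).
case: (a =P b) => [->|/eqP ab] /=; first by rewrite irr P5_irr.
by case: (P5 a b); case: (e _ _).
Qed.
End Comp.

Theorem lemma2p9 (T : finType) (e : rel T) :
  simple_graph e -> prime_graph e -> H_free P5 e -> H_free coP5 e ->
  forall v : T,
    (antisimplicial e v ->
     forall u : T, u != v -> ~~ e u v ->
     (forall w : T, w != v -> ~~ e w v ->
        #|nbhd e u :&: nbhd e v| <= #|nbhd e w :&: nbhd e v|) ->
     simplicial e u) /\
    (simplicial e v ->
     forall u : T, e u v ->
     (forall w : T, e w v ->
        #|nbhd e w :|: nbhd e v| <= #|nbhd e u :|: nbhd e v|) ->
     antisimplicial e u).
Proof.
move=> sg pr h1 h2 v; split; first exact: part1.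
have [sym irr] := sg.
move=> simp u euv maxm.
have uv : u != v by apply: contraTneq euv => ->; rewrite irr.
have key := part1 (ce_simple sym) (ce_prime pr) (ce_free1 irr h2) (ce_free2 irr h1).
have NE : forall w, e w v -> nbhd (ce e) w :&: nbhd (ce e) v = ~: (nbhd e w :|: nbhd e v).
  move=> w ewv; apply/setP => y; rewrite !inE /ce negb_or.
  case: (w =P y) => [<-|wy]; first by rewrite sym ewv /= andbF.
  case: (v =P y) => [<-|vy] /=; first by rewrite ewv.
  by [].
have : simplicial (ce e) u.
  apply: (key v) => //.
  - apply/forallP => x; apply/implyP; rewrite !inE /ce negb_and !negbK => hx.
    apply/forallP => y; apply/implyP; rewrite !inE /ce negb_and !negbK => hy.
    rewrite /ce negb_and !negbK; case: (x =P y) => //= /eqP xy.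
    case/orP: hx => [/eqP xv|evx].
      by move: hy; rewrite xv (negbTE xy).
    case/orP: hy => [/eqP <-|evy]; first by rewrite sym evx.
    by apply: (cliqueP simp); rewrite ?inE.
  - by rewrite /ce uv negbK.
  - move=> w wv; rewrite /ce wv negbK => ewv.
    rewrite (NE _ euv) (NE _ ewv) (cardsCs (~: (nbhd e u :|: _))) (cardsCs (~: (nbhd e w :|: _))) !setCK.
    by rewrite leq_sub2l // maxm.
move=> cs; apply/forallP => x; apply/implyP; rewrite !inE => nux.
apply/forallP => y; apply/implyP; rewrite !inE => nuy.
case: (x =P y) => [->|/eqP xy]; first by rewrite irr.
case: (u =P x) => [<-|/eqP ux]; first by [].
case: (u =P y) => [<-|/eqP uy]; first by rewrite sym.
have := cliqueP cs (x := x) (y := y); rewrite !inE /ce ux uy nux nuy xy => /(_ isT isT isT).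
by case/andP.
Qed.
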